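(* Let $\Sigma$ be an alphabet with $|\Sigma|=q$ and let $C\subseteq\Sigma^n$ be a code with $|C|\ge 2$ and minimum Levenshtein distance $d$. Suppose there is a word $v\in\Sigma^N$ that contains every codeword of $C$ as a (not necessarily contiguous) subsequence. If $$\frac{d}{2n} > 1 - \frac{n}{N},$$ then $$|C| \leq \frac{Nd}{Nd - 2(N-n)n}.$$
   Context: For words $x,y$ over $\Sigma$, the Levenshtein distance $d_\mathsf{L}(x,y)$ is the minimum number of single-symbol insertions and deletions needed to transform $x$ into $y$. The minimum Levenshtein distance of a code $C$ is $\min\{d_\mathsf{L}(c_1,c_2): c_1\neq c_2 \in C\}$. *)

(* Defs.v *)
From mathcomp Require Import all_boot all_order all_algebra.
Set Implicit Arguments. Unset Strict Implicit. Unset Printing Implicit Defensive.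

Section Lev.
Variable T : finType.

Definition deletions (x : seq T) : seq (seq T) :=
  [seq take i x ++ drop i.+1 x | i <- iota 0 (size x)].

Definition insertions (x : seq T) : seq (seq T) :=
  [seq take i x ++ a :: drop i x | i <- iota 0 (size x).+1, a <- enum T].

Definition edit_step (x y : seq T) : bool :=
  (y \in deletions x) || (y \in insertions x).

Fixpoint edits (k : nat) (x y : seq T) : bool :=
  match k with
  | 0 => x == y
  | k'.+1 => has (fun z => edits k' z y) (deletions x ++ insertions x)
  end.

Lemma editsS k (x y : seq T) :
  edits k.+1 x y = has (fun z => edits k z y) (deletions x ++ insertions x).
Proof. by []. Qed.

Lemma edits_cons k (a : T) (x y : seq T) : edits k x y -> edits k (a :: x) (a :: y).
Proof.
elim: k x => [|k IH] x; first by move=> /= /eqP ->.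
rewrite !editsS.
case/hasP=> z; rewrite mem_cat => Hz He; apply/hasP.
case/orP: Hz.
  move=> /mapP [i Hi Ez]; subst z; exists (a :: (take i x ++ drop i.+1 x)); last exact: IH.
  rewrite mem_cat; apply/orP; left; apply/mapP; exists i.+1 => //.
  by move: Hi; rewrite !mem_iota /= !add0n ltnS.
move=> /allpairsP [[i' b'] [Hi Hb Ez]]; subst z.
exists (a :: (take i' x ++ b' :: drop i' x)); last exact: IH.
rewrite mem_cat; apply/orP; right; apply/allpairsP; exists (i'.+1, b').
split; [|by rewrite mem_enum|by []].
by move: Hi; rewrite !mem_iota /= !add0n ltnS.
Qed.

Lemma edits_trans k l (x y z : seq T) :
  edits k x y -> edits l y z -> edits (k + l) x z.
Proof.
elim: k x => [|k IH] x; first by move=> /= /eqP ->.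
rewrite addSn !editsS; case/hasP=> w Hw He Hl; apply/hasP; exists w => //; exact: IH He Hl.
Qed.

Lemma edits_to_nil (x : seq T) : edits (size x) x [::].
Proof.
elim: x => [|a x IH] //; rewrite [size _]/= editsS; apply/hasP; exists x => //.
rewrite mem_cat; apply/orP; left; apply/mapP; exists 0 => //; by rewrite /= drop0.
Qed.

Lemma edits_from_nil (y : seq T) : edits (size y) [::] y.
Proof.
elim: y => [|a y IH] //; rewrite [size _]/= editsS; apply/hasP; exists [:: a].
  rewrite mem_cat; apply/orP; right; apply/allpairsP; exists (0, a).
  by split; [|rewrite mem_enum|].
exact: edits_cons.
Qed.

Lemma edits_ex (x y : seq T) : exists k, edits k x y.
Proof.
exists (size x + size y); exact: edits_trans (edits_to_nil x) (edits_from_nil y).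
Qed.

(* Levenshtein (insertion/deletion) distance d_L(x,y):
   minimum number of single-symbol insertions and deletions turning x into y *)
Definition levenshtein (x y : seq T) : nat := ex_minn (edits_ex x y).

End Lev.

(* v contains w as a (not necessarily contiguous) subsequence *)
(* mathcomp's  subseq w v  is exactly this notion. *)

(* Main.v *)
Require Import Defs.
From mathcomp Require Import all_boot all_order all_algebra zify ring.
Import Order.TTheory GRing.Theory Num.Theory.
Set Implicit Arguments. Unset Strict Implicit. Unset Printing Implicit Defensive.

Section L.
Variable T : finType.

Lemma edits_del (x s : seq T) : subseq s x -> edits (size x - size s) x s.
Proof.
elim: x s => [|a x IH] s.
  by case: s => //= _; rewrite eqxx.
case: s => [|b s].
  move=> _; rewrite subn0; exact: edits_to_nil.
rewrite /= => H; case: eqP H => [<-|ne] H.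
  rewrite subSS; exact: edits_cons (IH _ H).
have Hs := size_subseq H; rewrite /= in Hs.
have -> : (size x).+1 - (size s).+1 = 1 + (size x - (size (b :: s))) by rewrite /=; lia.
apply: (edits_trans (y := x)); last exact: IH.
rewrite editsS; apply/hasP; exists x => //; last by rewrite /= eqxx.
rewrite mem_cat; apply/orP; left; apply/mapP; exists 0 => //; by rewrite /= drop0.
Qed.

Lemma edits_ins (y s : seq T) : subseq s y -> edits (size y - size s) s y.
Proof.
elim: y s => [|a y IH] s.
  by case: s => //= _; rewrite eqxx.
case: s => [|b s].
  move=> _; rewrite subn0; exact: edits_from_nil.
rewrite /= => H; case: eqP H => [<-|ne] H.
  rewrite subSS; exact: edits_cons (IH _ H).
have Hs := size_subseq H; rewrite /= in Hs.
have -> : (size y).+1 - (size s).+1 = 1 + (size y - (size (b :: s))) by rewrite /=; lia.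
apply: (edits_trans (y := a :: b :: s)).
  rewrite editsS; apply/hasP; exists (a :: b :: s) => //; last by rewrite /= eqxx.
  rewrite mem_cat; apply/orP; right; apply/allpairsP; exists (0, a).
  by split; [|rewrite mem_enum|]; rewrite //= drop0 take0.
by apply: edits_cons; apply: IH.
Qed.

Lemma lev_le k (x y : seq T) : edits k x y -> levenshtein x y <= k.
Proof. by rewrite /levenshtein; case: ex_minnP => m _ Hm; apply: Hm. Qed.

Lemma subseq_mask_map (X : Type) (P Q : X -> bool) (t : seq X) (s : seq T) :
  (forall x, P x -> Q x) -> size t = size s ->
  subseq (mask (map P t) s) (mask (map Q t) s).
Proof.
move=> PQ; elim: s t => [|a s IH] [|x t] //= [] Ht.
case HP: (P x); first by rewrite (PQ _ HP) /= eqxx; exact: IH.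
case: (Q x) => //; last exact: IH.
exact: subseq_trans (IH _ Ht) (subseq_cons _ _).
Qed.
End L.

Definition mk N (S : {set 'I_N}) : bitseq := [seq i \in S | i <- enum 'I_N].
Arguments mk {N}.

Lemma size_mk N S : size (@mk N S) = N.
Proof. by rewrite size_map size_enum_ord. Qed.

Lemma size_mask_mk (T : Type) N (v : seq T) S : size v = N -> size (mask (@mk N S) v) = #|S|.
Proof.
move=> Hv; rewrite size_mask ?size_mk // count_map.
rewrite cardE /enum_mem size_filter (eq_filter (a2 := predT)) // filter_predT; exact: eq_count.
Qed.

Lemma exists_S (T : eqType) N (c v : seq T) : size v = N -> subseq c v ->
  exists S : {set 'I_N}, c = mask (mk S) v.
Proof.
move=> Hv /subseqP [m Hm ->]; exists [set i : 'I_N | nth false m i].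
congr mask; rewrite /mk -[LHS](mkseq_nth false) Hm Hv /mkseq -val_enum_ord -map_comp.
by apply: eq_map => i /=; rewrite inE.
Qed.

Section Count.
Variables (I : finType) (N n d : nat) (C : {set I}) (S : I -> {set 'I_N}).
Hypothesis HS : forall c, c \in C -> #|S c| = n.
Hypothesis HI : forall c c', c \in C -> c' \in C -> c != c' -> 2 * #|S c :&: S c'| + d <= 2 * n.

Definition mp (p : 'I_N) := \sum_(c in C) (p \in S c : nat).

Lemma sum_mp : \sum_p mp p = #|C| * n.
Proof.
rewrite /mp exchange_big /= -sum_nat_const; apply: eq_bigr => c Hc.
rewrite -(HS Hc) -sum1_card [RHS]big_mkcond /=; rewrite [RHS](eq_bigr (fun i => nat_of_bool (i \in S c))) // => i _; by case: (i \in S c).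
Qed.

Lemma sum_mp2 : \sum_p (mp p) ^ 2 = \sum_(c in C) \sum_(c' in C) #|S c :&: S c'|.
Proof.
rewrite /mp; under eq_bigr => p _ do rewrite expnS expn1 big_distrlr /=.
rewrite exchange_big /=; apply: eq_bigr => c _.
rewrite exchange_big /=; apply: eq_bigr => c' _.
rewrite -sum1_card [RHS]big_mkcond /=; apply: eq_bigr => p _.
by rewrite inE; case: (p \in S c); case: (p \in S c').
Qed.

Lemma sum_mp2_le : 2 * \sum_p (mp p) ^ 2 <= #|C| * (2 * n + (#|C| - 1) * (2 * n - d)).
Proof.
rewrite sum_mp2 big_distrr /= -sum_nat_const; apply: leq_sum => c Hc.
rewrite big_distrr /= (bigD1 c) //= setIid HS // leq_add2l.
have -> : #|C| - 1 = #|C :\ c| by rewrite (cardsD1 c C) Hc /=; lia.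
rewrite -sum_nat_const; rewrite [X in _ <= X](eq_bigl (fun c' => (c' \in C) && (c' != c))); last first.
  by move=> x; rewrite !inE andbC.
apply: leq_sum => c' /andP [Hc' ne].
have ne' : c != c' by rewrite eq_sym.
have := HI Hc Hc' ne'.
move=> H; rewrite -(leq_add2r d) subnK //; apply: leq_trans H; exact: leq_addl.
Qed.
End Count.


Section CS.
Local Open Scope ring_scope.

Lemma sum_const_ord (V : nmodType) N (x : V) : \sum_(j < N) x = x *+ N.
Proof. elim: N => [|N IH]; first by rewrite big_ord0. by rewrite big_ord_recr /= IH mulrS addrC. Qed.

Lemma cs_real (R : realDomainType) N (F : 'I_N -> R) :
  (\sum_i F i) ^+ 2 <= (\sum_i F i ^+ 2) *+ N.
Proof.
set S := \sum_i F i; set Q := \sum_i F i ^+ 2.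
have H0 : 0 <= \sum_i \sum_j (F i - F j) ^+ 2.
  by apply: sumr_ge0 => i _; apply: sumr_ge0 => j _; apply: sqr_ge0.
have E : \sum_i \sum_j (F i - F j) ^+ 2 = (Q *+ N) *+ 2 - (S ^+ 2) *+ 2.
  under eq_bigr => i _ do under eq_bigr => j _ do rewrite sqrrB.
  under eq_bigr => i _ do rewrite big_split /= sumrB.
  rewrite big_split /= sumrB.
  have E1 : \sum_i \sum_(j < N) F i ^+ 2 = Q *+ N.
    rewrite /Q; under eq_bigr => i _ do rewrite sum_const_ord; by rewrite sumrMnl.
  have E2 : \sum_(i < N) \sum_j F j ^+ 2 = Q *+ N.
    by rewrite sum_const_ord.
  have E3 : \sum_i \sum_j F i * F j *+ 2 = S ^+ 2 *+ 2.
    rewrite /S expr2 mulr_suml -sumrMnl; apply: eq_bigr => i _.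
    by rewrite mulr_sumr sumrMnl.
  rewrite E1 E2 E3 mulr2n; ring.
by move: H0; rewrite E subr_ge0 lerMn2r.
Qed.

Lemma cs_nat N (a : 'I_N -> nat) : ((\sum_i a i) ^ 2 <= N * \sum_i (a i) ^ 2)%N.
Proof.
rewrite -(ler_nat int) natrX natr_sum natrM natr_sum.
under [X in _ <= _ * X]eq_bigr => i _ do rewrite natrX.
by rewrite mulrC mulr_natr cs_real.
Qed.
End CS.
Lemma arithF (M N n d : nat) : d <= 2 * n -> n <= N -> 0 < M ->
 2 * M * n ^ 2 <= N * (2 * n + (M - 1) * (2 * n - d)) ->
 M * (N * d) <= N * d + M * (2 * (N - n) * n).
Proof.
move=> H1 H2 H3.
have [a Ha] : exists a, 2 * n = d + a by exists (2*n - d); lia.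
have [f Hf] : exists f, N = n + f by exists (N - n); lia.
have [m Hm] : exists m, M = m.+1 by exists M.-1; lia.
subst N M.
have -> : 2 * n - d = a by lia.
have -> : n + f - n = f by lia.
rewrite subn1 /=.
lia.
Qed.

Theorem mainTheorem7 (Sigma : finType) (q n N d : nat)
    (C : {set n.-tuple Sigma}) (v : N.-tuple Sigma) :
  #|Sigma| = q ->
  2 <= #|C| ->
  (forall c1 c2, c1 \in C -> c2 \in C -> c1 != c2 ->
     d <= levenshtein (tval c1) (tval c2)) ->
  (exists c1 c2, [/\ c1 \in C, c2 \in C, c1 != c2 &
     levenshtein (tval c1) (tval c2) = d]) ->
  (forall c, c \in C -> subseq (tval c) (tval v)) ->
  (d%:R / (2 * n)%:R > 1 - n%:R / N%:R :> rat)%R ->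
  (#|C|%:R <= (N * d)%:R / ((N * d)%:R - (2 * (N - n) * n)%:R) :> rat)%R.
Proof.
move=> _ HC2 Hd [c1 [c2 [Hc1 Hc2 Hne _]]] Hsub Hrat.
pose S (c : n.-tuple Sigma) := odflt set0 [pick S : {set 'I_N} | tval c == mask (mk S) v].
have HSc : forall c, c \in C -> tval c = mask (mk (S c)) v.
  move=> c Hc; rewrite /S; case: pickP => [X /eqP //|H0] /=.
  have [X HX] := exists_S (size_tuple v) (Hsub c Hc).
  by move: (H0 X); rewrite HX eqxx.
have HS : forall c, c \in C -> #|S c| = n.
  by move=> c Hc; rewrite -(size_mask_mk (S c) (size_tuple v)) -HSc // size_tuple.
have HI : forall c c', c \in C -> c' \in C -> c != c' ->
    2 * #|S c :&: S c'| + d <= 2 * n.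
  move=> c c' Hc Hc' ne.
  set w := mask (mk (S c :&: S c')) v.
  have Hsz : size w = #|S c :&: S c'| by rewrite size_mask_mk // size_tuple.
  have Ht : size (enum 'I_N) = size v by rewrite size_enum_ord size_tuple.
  have W1 : subseq w c.
    rewrite HSc // /w /mk; apply: subseq_mask_map Ht => i; rewrite inE => /andP [] //.
  have W2 : subseq w c'.
    rewrite HSc // /w /mk; apply: subseq_mask_map Ht => i; rewrite inE => /andP [] //.
  have E := edits_trans (edits_del W1) (edits_ins W2).
  have := leq_trans (Hd _ _ Hc Hc' ne) (lev_le E).
  have := size_subseq W1; rewrite Hsz !size_tuple; lia.
have Hd2n : d <= 2 * n by have := HI _ _ Hc1 Hc2 Hne; lia.
have HnN : n <= N by rewrite -(HS c1 Hc1); have := max_card (mem (S c1)); rewrite card_ord.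
set M := #|C|.
have A := sum_mp2_le HS HI.
have B := sum_mp HS.
have Cs := cs_nat (mp C S).
rewrite B in Cs.
move: A Cs; rewrite -/M; set Q := \sum_p _ => A Cs.
have HM : 0 < M by lia.
have K : 2 * M * n ^ 2 <= N * (2 * n + (M - 1) * (2 * n - d)).
  rewrite -(leq_pmul2l HM); apply: leq_trans (_ : N * (2 * Q) <= _).
    by move: Cs; rewrite expnMn; nia.
  have := leq_mul (leqnn N) A; nia.
have F : M * (N * d) <= N * d + M * (2 * (N - n) * n).
  exact: arithF.
have Hn0 : 0 < n.
  case: (posnP n) Hrat => [->|//]; rewrite muln0 invr0 mulr0 mul0r subr0 ltr10 //.
have HN0 : 0 < N by apply: leq_trans HnN.
Open Scope ring_scope.
have Hpos : (2 * (N - n) * n < N * d)%N.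
  rewrite -(ltr_nat rat).
  set x : rat := n%:R / N%:R.
  have hx : x * N%:R = n%:R by rewrite /x divfK // pnatr_eq0 -lt0n.
  have h1 : (1 - x) * (2 * n)%:R < d%:R.
    by rewrite -ltr_pdivlMr // ltr0n muln_gt0.
  have h2 : N%:R * ((1 - x) * (2 * n)%:R) < N%:R * d%:R :> rat by rewrite ltr_pM2l // ltr0n.
  have e : N%:R * ((1 - x) * (2 * n)%:R) = (2 * (N - n) * n)%:R :> rat.
    rewrite !natrM natrB // -hx; ring.
  by rewrite -e [X in _ < X]natrM.
rewrite ler_pdivlMr ?subr_gt0 ?ltr_nat //.
rewrite mulrBr lerBlDr -!natrM -natrD ler_nat -/M.
exact: F.
Qed.
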